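(* Let $\Sigma=\begin{pmatrix}\Sigma_{11}&\Sigma_{12}\\ \Sigma_{12}&\Sigma_{22}\end{pmatrix}$ be a real symmetric positive semidefinite $2\times 2$ matrix with $\Sigma_{11}>0$ and $\Sigma_{22}>0$, and let $b_1,b_2$ be real numbers. Define \[\rho=\frac{\Sigma_{12}}{\sqrt{\Sigma_{11}\Sigma_{22}}},\qquad \rho^*=\sqrt{\frac{\Sigma_{22}}{\Sigma_{11}}}.\] Let $(Z_1,Z_2)$ be a bivariate normal random vector with $\mathbb{E}Z_1=\mathbb{E}Z_2=0$, $\operatorname{Var}(Z_1)=\operatorname{Var}(Z_2)=1$ and $\operatorname{Cov}(Z_1,Z_2)=\rho$, and let $(Z_1^*,Z_2^* )$ be a bivariate normal random vector with $\mathbb{E}Z^*_1=\mathbb{E}Z^*_2=0$, $\operatorname{Var}(Z^*_1)=\operatorname{Var}(Z^*_2)=1$ and $\operatorname{Cov}(Z^*_1,Z^*_2)=\rho^*$. Let \[\alpha=\mathbb{P}(Z_1^*>b_1 \,\cup\, Z_2^*>b_2).\] Suppose that (1) $b_1\ge b_2\ge 0$, and (2) $\Sigma_{12}\ge \Sigma_{22}$. Then \[\mathbb{P}(Z_1>b_1\,\cup\, Z_2>b_2)\le \alpha .\]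
   Context: Interpretation (not needed for the statement): $\Sigma$ is the covariance matrix of two successive asymptotically normal, mean-zero treatment-effect estimates $(\hat\eta_1,\hat\eta_2)$ under the null hypothesis, $Z_k=\hat\eta_k/\sqrt{\Sigma_{kk}}$ are the standardised statistics, and $(Z_1^*,Z_2^* )$ are the standardised statistics of a sequence with the same variances but with the ''canonical'' covariance $\operatorname{Cov}=\Sigma_{22}$; $b_1,b_2$ are upper (efficacy) boundary values of a two-analysis group sequential test, computed so that the canonical sequence has type 1 error $\alpha$. Under hypotheses (2) and positive semidefiniteness one has $\Sigma_{22}\le\Sigma_{11}$, so $\rho^*\in(0,1]$ and the distribution of $(Z_1^*,Z_2^* )$ is well defined. *)

(* Defs.v *)
From HB Require Import structures.
From mathcomp Require Import all_boot all_order all_algebra.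
From mathcomp Require Import all_classical all_reals all_analysis.
Set Implicit Arguments. Unset Strict Implicit. Unset Printing Implicit Defensive.
Import Order.TTheory GRing.Theory Num.Theory.
Local Open Scope classical_set_scope.
Local Open Scope ring_scope.

(* Law of a standard bivariate normal vector (mean 0, variances 1,
   correlation r, with -1 <= r <= 1): the image of the product of two
   independent N(0,1) laws under the standard (Cholesky) linear map
   (x, y) |-> (x, r x + sqrt(1 - r^2) y).  This is the law N(0, A A^T) of A X
   with X standard normal in R^2 and A = [[1,0],[r,sqrt(1-r^2)]],
   A A^T = [[1,r],[r,1]]. *)
Definition std_bvn_law (R : realType) (r : R) : set (R * R) -> \bar R :=
  pushforward ((normal_prob 0 1) \x (normal_prob 0 1))%E
    (fun xy : R * R => (xy.1, r * xy.1 + Num.sqrt (1 - r ^+ 2) * xy.2)).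

Definition is_std_bvn (R : realType) (d : measure_display) (T : measurableType d)
  (P : probability T R) (Z1 Z2 : T -> R) (r : R) : Prop :=
  [/\ measurable_fun setT Z1, measurable_fun setT Z2 &
      forall A : set (R * R), measurable A ->
        P ((fun t => (Z1 t, Z2 t)) @^-1` A) = std_bvn_law r A].

(* Main.v *)
Require Import Defs.
From HB Require Import structures.
From mathcomp Require Import all_boot all_order all_algebra.
From mathcomp Require Import all_classical all_reals all_analysis.
From mathcomp Require Import measurable_realfun.
From mathcomp Require Import ring lra.
Set Implicit Arguments. Unset Strict Implicit. Unset Printing Implicit Defensive.
Import Order.TTheory GRing.Theory Num.Theory.
Import numFieldNormedType.Exports.
Local Open Scope classical_set_scope.
Local Open Scope ring_scope.
Section S.
Context {R : realType}.
Local Notation mu := (@lebesgue_measure R).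
Local Open Scope ereal_scope.

Lemma lebesgue_measure_shift (c : R) (A : set R) : measurable A ->
  pushforward mu (fun x : R => (x + c)%R : measurableTypeR R) A = mu A.
Proof.
have mf : measurable_fun setT (fun x : R => (x + c)%R : measurableTypeR R).
  by apply: measurable_funD.
move=> mA; apply/esym.
have := (@lebesgue_measure_unique R (pushforward mu (fun x : R => (x + c)%R : measurableTypeR R))).
move=> /(_ mf) H; apply: H => //.
move=> _ [[a b]] _ <- /=.
rewrite /pushforward.
have -> : (fun x : R => (x + c)%R) @^-1` `]a, b]%classic = `](a - c)%R, (b - c)%R]%classic.
  apply/seteqP; split => x /=; rewrite !in_itv /= ?ltrBlDr ?lerBrDr //.
rewrite !lebesgue_measure_itv /= !lte_fin ltrD2r; congr (if _ then _ else _).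
rewrite -!EFinD; congr (_%:E); rewrite opprB.
by rewrite addrA subrK.
Qed.
End S.
Section S2.
Context {R : realType}.
Local Notation mu := (@lebesgue_measure R).
Local Open Scope ereal_scope.

Lemma integral_shift (c : R) (f : measurableTypeR R -> \bar R) :
  measurable_fun setT f -> (forall x, 0 <= f x) ->
  \int[mu]_x f (x + c)%R = \int[mu]_x f x.
Proof.
move=> mf f0.
have mc : measurable_fun (setT : set (measurableTypeR R)) (fun x : R => (x + c)%R : measurableTypeR R).
  by apply: measurable_funD.
have := @ge0_integral_pushforward _ _ (measurableTypeR R) (measurableTypeR R) R _ mc mu setT f measurableT mf (fun y _ => f0 y).
rewrite preimage_setT => <-.
by apply: eq_measure_integral => //= A mA _; exact: lebesgue_measure_shift.
Qed.

Lemma integral_opp (f : measurableTypeR R -> \bar R) :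
  measurable_fun setT f -> (forall x, 0 <= f x) ->
  \int[mu]_x f (- x)%R = \int[mu]_x f x.
Proof.
move=> mf f0.
have mc : measurable_fun (setT : set (measurableTypeR R)) (-%R : R -> measurableTypeR R) by [].
have := @ge0_integral_pushforward _ _ (measurableTypeR R) (measurableTypeR R) R _ mc mu setT f measurableT mf (fun y _ => f0 y).
rewrite preimage_setT => <-.
by apply: eq_measure_integral => //= A mA _; exact: lebesgue_measureN.
Qed.
End S2.
Section S3.
Context {R : realType}.
Local Notation mu := (@lebesgue_measure R).
Local Notation RR := (measurableTypeR R).
Local Open Scope ereal_scope.

Lemma mlin (a b : R) : measurable_fun setT (fun z : RR * RR => (a * z.1 + b * z.2)%R).
Proof.
apply: measurable_funD; apply: measurable_funM.
- exact: measurable_cst.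
- exact: measurable_fst.
- exact: measurable_cst.
- exact: measurable_snd.
Qed.

Lemma mlin2 (a b c e : R) : measurable_fun setT
  (fun z : RR * RR => ((a * z.1 + b * z.2)%R, (c * z.1 + e * z.2)%R)).
Proof. by apply: measurable_fun_pair; apply: mlin. Qed.

Lemma shearY (p : R) (g : RR * RR -> \bar R) : measurable_fun setT g ->
  (forall z, 0 <= g z) ->
  \int[mu \x mu]_z g (z.1, (z.2 + p * z.1)%R) = \int[mu \x mu]_z g z.
Proof.
move=> mg g0.
have mS : measurable_fun setT (fun z : RR * RR => g (z.1, (z.2 + p * z.1)%R)).
  apply: measurableT_comp => //.
  have := mlin2 1 0 p 1; congr measurable_fun; apply/funext => z.
  by rewrite !mul1r mul0r addr0 addrC.
rewrite (fubini_tonelli1 _ mS) // (fubini_tonelli1 _ mg) //.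
apply: eq_integral => x _; rewrite /fubini_F /=.
apply: (@integral_shift R (p * x)%R (fun y => g (x, y))) => //.
exact: measurable_fun_pair2.
Qed.

Lemma shearX (q : R) (g : RR * RR -> \bar R) : measurable_fun setT g ->
  (forall z, 0 <= g z) ->
  \int[mu \x mu]_z g ((z.1 + q * z.2)%R, z.2) = \int[mu \x mu]_z g z.
Proof.
move=> mg g0.
have mS : measurable_fun setT (fun z : RR * RR => g ((z.1 + q * z.2)%R, z.2)).
  apply: measurableT_comp => //.
  have := mlin2 1 q 0 1; congr measurable_fun; apply/funext => z.
  by rewrite !mul1r mul0r add0r.
rewrite (fubini_tonelli2 _ mS) // (fubini_tonelli2 _ mg) //.
apply: eq_integral => y _; rewrite /fubini_G /=.
apply: (@integral_shift R (q * y)%R (fun x => g (x, y))) => //.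
exact: measurable_fun_pair1.
Qed.

Lemma flipY (g : RR * RR -> \bar R) : measurable_fun setT g ->
  (forall z, 0 <= g z) ->
  \int[mu \x mu]_z g (z.1, (- z.2)%R) = \int[mu \x mu]_z g z.
Proof.
move=> mg g0.
have mS : measurable_fun setT (fun z : RR * RR => g (z.1, (- z.2)%R)).
  apply: measurableT_comp => //.
  have := mlin2 1 0 0 (-1); congr measurable_fun; apply/funext => z.
  by rewrite !mul1r !mul0r addr0 add0r mulN1r.
rewrite (fubini_tonelli1 _ mS) // (fubini_tonelli1 _ mg) //.
apply: eq_integral => x _; rewrite /fubini_F /=.
apply: (@integral_opp R (fun y => g (x, y))) => //.
exact: measurable_fun_pair2.
Qed.
End S3.
Section S4.
Context {R : realType}.
Local Notation mu := (@lebesgue_measure R).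
Local Notation RR := (measurableTypeR R).
Local Open Scope ereal_scope.

Lemma mshX (q : R) : measurable_fun setT (fun v : RR * RR => ((v.1 + q * v.2)%R, v.2)).
Proof.
have := mlin2 1 q 0 1; congr measurable_fun; apply/funext => z.
by rewrite !mul1r mul0r add0r.
Qed.

Lemma mshY (p : R) : measurable_fun setT (fun v : RR * RR => (v.1, (v.2 + p * v.1)%R)).
Proof.
have := mlin2 1 0 p 1; congr measurable_fun; apply/funext => z.
by rewrite !mul1r mul0r addr0 addrC.
Qed.

Lemma refl_invariant (a b : R) (g : RR * RR -> \bar R) :
  (a ^+ 2 + b ^+ 2 = 1)%R -> b != 0%R -> measurable_fun setT g ->
  (forall z, 0 <= g z) ->
  \int[mu \x mu]_z g ((a * z.1 + b * z.2)%R, (b * z.1 - a * z.2)%R) =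
  \int[mu \x mu]_z g z.
Proof.
move=> ab1 b0 mg g0.
pose q := (- (1 - a) / b)%R.
have qb : (q * b = a - 1)%R by rewrite /q; field.
have qb2 : (q * (1 + a) = - b)%R.
  have -> : (q * (1 + a) = - (1 - a ^+ 2) / b)%R by rewrite /q; field.
  have -> : (1 - a ^+ 2 = b ^+ 2)%R by rewrite -ab1; ring.
  by field.
pose G3 := fun v : RR * RR => g ((v.1 + q * v.2)%R, v.2).
pose G2 := fun v : RR * RR => G3 (v.1, (v.2 + b * v.1)%R).
pose G1 := fun v : RR * RR => G2 ((v.1 + q * v.2)%R, v.2).
have mG3 : measurable_fun setT G3 by apply: measurableT_comp => //; exact: mshX.
have mG2 : measurable_fun setT G2 by apply: measurableT_comp => //; exact: mshY.
have mG1 : measurable_fun setT G1 by apply: measurableT_comp => //; exact: mshX.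
transitivity (\int[mu \x mu]_z G1 (z.1, (- z.2)%R)).
  apply: eq_integral => z _; rewrite /G1 /G2 /G3 /=; congr g; congr pair.
    apply/eqP; rewrite -subr_eq0; apply/eqP.
    transitivity ((a - 1 - q * b) * z.1 + (b + q * (2 + q * b)) * z.2)%R; first ring.
    rewrite qb; transitivity ((q * (1 + a) + b) * z.2)%R; first ring.
    by rewrite qb2 addNr mul0r.
  apply/eqP; rewrite -subr_eq0; apply/eqP.
  transitivity ((1 - a + q * b) * z.2)%R; first ring.
  by rewrite qb; ring.
rewrite (flipY mG1) //; last by move=> z; exact: g0.
rewrite (shearX q mG2) //; last by move=> z; exact: g0.
rewrite (shearY b mG3) //; last by move=> z; exact: g0.
by rewrite (shearX q mg).
Qed.
End S4.
Section S5.
Context {R : realType}.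
Local Notation mu := (@lebesgue_measure R).
Local Notation RR := (measurableTypeR R).
Local Notation P := (@normal_prob R 0 1).
Local Notation phi := (@normal_pdf R 0 1).
Local Open Scope ereal_scope.
Import HBNNSimple.

Lemma mphiE : measurable_fun setT (fun x : RR => (phi x)%:E).
Proof. by apply/measurable_EFinP; exact: measurable_normal_pdf. Qed.

Lemma normal_density (f : RR -> \bar R) : (forall x, 0 <= f x) ->
  measurable_fun setT f ->
  \int[P]_x f x = \int[mu]_x (f x * (phi x)%:E).
Proof.
move=> f0 mf; set g := fun x : RR => (phi x)%:E.
have mE : measurable (setT : set RR) by [].
pose h := nnsfun_approx mE mf.
have -> : \int[P]_x f x = lim (\int[P]_x (EFin \o h n) x @[n --> \oo]).
  have fE x : f x = lim ((EFin \o h n) x @[n --> \oo]).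
    by apply/esym/cvg_lim => //; exact: cvg_nnsfun_approx.
  under eq_integral => x _ do rewrite fE.
  apply: monotone_convergence => //.
  - by move=> n; apply/measurable_EFinP; exact/measurable_funP.
  - by move=> n x Ex //=; rewrite lee_fin.
  - by move=> x Ex a b ab; rewrite lee_fin; exact/lefP/nd_nnsfun_approx.
have -> : \int[mu]_x (f x * g x) =
    lim (\int[mu]_x ((EFin \o h n) x * g x) @[n --> \oo]).
  have fg x : f x * g x = lim (((EFin \o h n) \* g) x @[n --> \oo]).
    by apply/esym/cvg_lim => //; apply: cvgeZr; [by []|exact: cvg_nnsfun_approx].
  under eq_integral => x _ do rewrite fg.
  apply: monotone_convergence => [//| | |].
  - move=> n; apply/emeasurable_funM; first exact/measurable_EFinP.
    exact: mphiE.
  - by move=> n x Ex /=; rewrite mule_ge0 ?lee_fin ?normal_pdf_ge0.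
  - by move=> x Ex a b ab/=; rewrite lee_wpmul2r ?lee_fin ?normal_pdf_ge0//; exact/lefP/nd_nnsfun_approx.
suff suf n : \int[mu]_x ((EFin \o h n) x * g x) = \int[P]_x (EFin \o h n) x.
  by congr (lim (_ @ \oo)); apply/funext => n; rewrite suf.
transitivity (\int[P]_x
   (\sum_(y \in range (h n)) (y * \1_(h n @^-1` [set y]) x)%:E)); last first.
  by apply: eq_integral => t tE; rewrite /= fimfunE -fsumEFin.
have indich m r : measurable_fun setT (fun x => (r * \1_(h m @^-1` [set r]) x)%:E).
  by apply: (measurable_comp measurableT) => //; exact: measurable_funM.
rewrite ge0_integral_fsum//; last by move=> m y Ey; exact: nnfun_muleindic_ge0.
transitivity (\int[mu]_x (\sum_(y \in range (h n))
    (y * \1_(h n @^-1` [set y]) x)%:E * g x)).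
  under [RHS]eq_integral => x xE.
    rewrite -ge0_mule_fsuml => [|y]; last exact: nnfun_muleindic_ge0.
    rewrite fsumEFin // -(fimfunE _ x); over.
  by [].
rewrite ge0_integral_fsum//; last 2 first.
  - move=> y; apply: emeasurable_funM => //; exact: mphiE.
  - by move=> m y Ey; rewrite mule_ge0 ?nnfun_muleindic_ge0 // /g lee_fin normal_pdf_ge0.
apply: eq_fsbigr => r rhn.
under [RHS]eq_integral do rewrite EFinM.
rewrite integralZl_indic_nnsfun => //.
under eq_integral do rewrite EFinM -muleA.
rewrite ge0_integralZl//.
- under eq_integral do rewrite muleC.
  rewrite (eq_integral (g \_ (h n @^-1` [set r]))); last first.
    by move=> x xE; rewrite epatch_indic.
  rewrite -integral_mkcondr integral_indic//= setTI.
  by rewrite /normal_prob setIT.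
- apply: (@emeasurable_funM _ _ _ _ (fun x => (\1_(h n @^-1` [set r]) x)%:E) g).
    by apply/measurable_EFinP; exact: measurable_indic.
  exact: mphiE.
- by move=> t Et; rewrite mule_ge0 // /g lee_fin normal_pdf_ge0.
- by move: rhn; rewrite inE => -[t _ <-]; rewrite lee_fin.
Qed.
End S5.
Section S6.
Context {R : realType}.
Local Notation mu := (@lebesgue_measure R).
Local Notation RR := (measurableTypeR R).
Local Notation P := (@normal_prob R 0 1).
Local Notation phi := (@normal_pdf R 0 1).
Local Open Scope ereal_scope.

Lemma normal2_density (h : RR * RR -> \bar R) : (forall z, 0 <= h z) ->
  measurable_fun setT h ->
  \int[P \x P]_z h z = \int[mu \x mu]_z (h z * (phi z.1 * phi z.2)%:E).
Proof.
move=> h0 mh.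
have mphi2 : measurable_fun setT (fun z : RR * RR => (phi z.1 * phi z.2)%:E).
  apply/measurable_EFinP; apply: measurable_funM.
    by apply: measurableT_comp; [exact: measurable_normal_pdf|exact: measurable_fst].
  by apply: measurableT_comp; [exact: measurable_normal_pdf|exact: measurable_snd].
have mH : measurable_fun setT (fun z : RR * RR => h z * (phi z.1 * phi z.2)%:E).
  exact: emeasurable_funM.
rewrite (fubini_tonelli1 _ mh h0).
rewrite (fubini_tonelli1 _ mH); last by move=> z; rewrite mule_ge0 // lee_fin mulr_ge0 // normal_pdf_ge0.
rewrite normal_density; last 2 first.
- by move=> x; apply: integral_ge0 => y _; exact: h0.
- exact: (measurable_fun_fubini_tonelli_F h mh).
apply: eq_integral => x _; rewrite /fubini_F /=.
rewrite normal_density; last 2 first.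
- by move=> y; exact: h0.
- exact: measurable_fun_pair2.
rewrite -ge0_integralZr //; last 3 first.
- apply: emeasurable_funM; first exact: measurable_fun_pair2.
  exact: mphiE.
- by move=> y _; rewrite mule_ge0 // lee_fin normal_pdf_ge0.
- by rewrite lee_fin normal_pdf_ge0.
apply: eq_integral => y _; rewrite -muleA; congr (_ * _).
by rewrite -EFinM mulrC.
Qed.
End S6.
Section S7.
Context {R : realType}.
Local Notation mu := (@lebesgue_measure R).
Local Notation RR := (measurableTypeR R).
Local Notation P := (@normal_prob R 0 1).
Local Notation phi := (@normal_pdf R 0 1).
Local Open Scope ereal_scope.

Lemma phi2E (x y : R) : (phi x * phi y = normal_peak 1 ^+ 2 * expR (- (x ^+ 2 + y ^+ 2) / 2))%R.
Proof.
rewrite normal_pdfE ?oner_neq0 // /normal_fun !subr0.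
rewrite mulrACA -expr2 -expRD; congr (_ * expR _)%R.
by rewrite -mulr_natr; field.
Qed.

Lemma phi2_refl (a b x y : R) : (a ^+ 2 + b ^+ 2 = 1)%R ->
  (phi (a * x + b * y) * phi (b * x - a * y) = phi x * phi y)%R.
Proof.
move=> ab1; rewrite !phi2E; congr (_ * expR (- _ / 2))%R.
transitivity ((a ^+ 2 + b ^+ 2) * (x ^+ 2 + y ^+ 2))%R; first ring.
by rewrite ab1 mul1r.
Qed.

Lemma gauss_refl (a b : R) (E : set (RR * RR)) : (a ^+ 2 + b ^+ 2 = 1)%R ->
  b != 0%R -> measurable E ->
  (P \x P) ((fun z : RR * RR => ((a * z.1 + b * z.2)%R, (b * z.1 - a * z.2)%R)) @^-1` E)
  = (P \x P) E.
Proof.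
move=> ab1 b0 mE.
set sig := (fun z : RR * RR => ((a * z.1 + b * z.2)%R, (b * z.1 - a * z.2)%R)).
have msig : measurable_fun setT sig.
  have := mlin2 a b b (- a); congr measurable_fun; apply/funext => z.
  by rewrite /sig mulNr.
have mE' : measurable (sig @^-1` E) by rewrite -[X in measurable X]setTI; exact: msig.
have mphi2 : measurable_fun setT (fun z : RR * RR => (phi z.1 * phi z.2)%:E).
  apply/measurable_EFinP; apply: measurable_funM.
    by apply: measurableT_comp; [exact: measurable_normal_pdf|exact: measurable_fst].
  by apply: measurableT_comp; [exact: measurable_normal_pdf|exact: measurable_snd].
have mI : measurable_fun setT (fun z : RR * RR => (\1_E z : R)%:E).
  by apply/measurable_EFinP; exact: measurable_indic.
have mI' : measurable_fun setT (fun z : RR * RR => (\1_(sig @^-1` E) z : R)%:E).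
  by apply/measurable_EFinP; exact: measurable_indic.
have iE (A : set (RR * RR)) : measurable A ->
    (P \x P) A = \int[P \x P]_z (\1_A z : R)%:E.
  by move=> mA; rewrite integral_indic // setIT.
rewrite (iE _ mE') (iE _ mE) !normal2_density //.
pose G := fun w : RR * RR => (\1_E w : R)%:E * (phi w.1 * phi w.2)%:E.
have mG : measurable_fun setT G by exact: emeasurable_funM.
transitivity (\int[mu \x mu]_z G (sig z)).
  apply: eq_integral => z _; rewrite /G /sig /=.
  by rewrite phi2_refl.
by apply: refl_invariant => // z; rewrite /G mule_ge0 // lee_fin ?mulr_ge0 ?normal_pdf_ge0.
Qed.
End S7.
Section S8.
Context {R : realType}.
Local Notation mu := (@lebesgue_measure R).
Local Notation RR := (measurableTypeR R).
Local Notation P := (@normal_prob R 0 1).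
Local Open Scope ereal_scope.

Lemma mset_lt (g : RR * RR -> R) (c : R) : measurable_fun setT g ->
  measurable [set z | (c < g z)%R].
Proof.
move=> mg; rewrite -preimage_itvoy -[X in measurable X]setTI.
exact: mg.
Qed.

Definition Uset (b1 b2 c d : R) : set (RR * RR) :=
  [set z | (b1 < z.1)%R] `|` [set z | (b2 < c * z.1 + d * z.2)%R].

Lemma mUset b1 b2 c d : measurable (Uset b1 b2 c d).
Proof.
apply: measurableU; apply: mset_lt; [exact: measurable_fst | exact: mlin].
Qed.

Lemma main_ineq (r rs b1 b2 : R) : (0 <= rs)%R -> (rs <= r)%R -> (r <= 1)%R ->
  (P \x P) (Uset b1 b2 r (Num.sqrt (1 - r ^+ 2))) <=
  (P \x P) (Uset b1 b2 rs (Num.sqrt (1 - rs ^+ 2))).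
Proof.
move=> rs0 rsr r1.
have [->//|neq] := eqVneq rs r.
have lt : (rs < r)%R by rewrite lt_neqAle neq rsr.
set s := Num.sqrt (1 - r ^+ 2); set ss := Num.sqrt (1 - rs ^+ 2).
have r0 : (0 < r)%R by apply: le_lt_trans lt.
have hs2 : (s ^+ 2 = 1 - r ^+ 2)%R by rewrite sqr_sqrtr // subr_ge0 expr_le1 // ltW.
have hss2 : (ss ^+ 2 = 1 - rs ^+ 2)%R.
  by rewrite sqr_sqrtr // subr_ge0 expr_le1 // (le_trans rsr).
have s0 : (0 <= s)%R by apply: sqrtr_ge0.
have sss : (s < ss)%R.
  rewrite ltr_sqrt; first by rewrite ltrD2l ltrN2 ltr_pXn2r // ?nnegrE // ltW.
  by rewrite subr_gt0 expr_lt1 // (lt_le_trans lt).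
have ss0 : (0 < ss)%R by apply: le_lt_trans sss.
pose w1 := (r - rs)%R; pose w2 := (s - ss)%R.
pose N := (w1 ^+ 2 + w2 ^+ 2)%R.
have w10 : (0 < w1)%R by rewrite subr_gt0.
have w20 : w2 != 0%R by rewrite subr_eq0 lt_eqF.
have N0 : (0 < N)%R by rewrite ltr_pwDl ?sqr_ge0 // exprn_gt0.
have Nn0 : N != 0%R by rewrite gt_eqF.
pose a := (1 - 2 * w1 ^+ 2 / N)%R; pose b := (- (2 * w1 * w2) / N)%R.
have ab1 : (a ^+ 2 + b ^+ 2 = 1)%R by rewrite /a /b /N; field; rewrite -/N.
have b0 : b != 0%R.
  rewrite /b mulf_neq0 // ?invr_eq0 // oppr_eq0 !mulf_neq0 //.
  by rewrite gt_eqF.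
have huw : (2 * (r * w1 + s * w2) = N)%R.
  rewrite /N /w1 /w2; apply/eqP; rewrite -subr_eq0; apply/eqP.
  transitivity (r ^+ 2 + s ^+ 2 - (rs ^+ 2 + ss ^+ 2))%R; first ring.
  by rewrite hs2 hss2; ring.
have c1 : (a * r + b * s = rs)%R.
  transitivity (r - w1 * (2 * (r * w1 + s * w2)) / N)%R.
    by rewrite /a /b; field.
  by rewrite huw mulfK // /w1; ring.
have c2 : (b * r - a * s = ss)%R.
  transitivity (s - w2 * (2 * (r * w1 + s * w2)) / N)%R.
    by rewrite /a /b /N; field; rewrite -/N.
  by rewrite huw mulfK // /w2; ring.
have c3 : (a * rs + b * ss = r)%R.
  rewrite -c1 -c2; transitivity ((a ^+ 2 + b ^+ 2) * r)%R; first ring.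
  by rewrite ab1 mul1r.
have c4 : (b * rs - a * ss = s)%R.
  rewrite -c1 -c2; transitivity ((a ^+ 2 + b ^+ 2) * s)%R; first ring.
  by rewrite ab1 mul1r.
set sig := (fun z : RR * RR => ((a * z.1 + b * z.2)%R, (b * z.1 - a * z.2)%R)).
have e1 z : (r * (sig z).1 + s * (sig z).2 = rs * z.1 + ss * z.2)%R.
  rewrite /sig /= -c1 -c2; ring.
have e2 z : (rs * (sig z).1 + ss * (sig z).2 = r * z.1 + s * z.2)%R.
  rewrite /sig /= -c3 -c4; ring.
have K0 : (0 < ss * r - s * rs)%R.
  rewrite subr_gt0; apply: (le_lt_trans (y := (s * r)%R)).
    by rewrite ler_wpM2l.
  by rewrite ltr_pM2r.
set Ur := Uset b1 b2 r s; set Us := Uset b1 b2 rs ss.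
have incl : Ur `\` Us `<=` sig @^-1` (Us `\` Ur).
  move=> z [Urz Usz].
  have [z1 z2] : (z.1 <= b1)%R /\ (rs * z.1 + ss * z.2 <= b2)%R.
    by split; rewrite leNgt; apply/negP => H; apply: Usz; [left|right].
  have z3 : (b2 < r * z.1 + s * z.2)%R.
    by case: Urz => //= H; move: z1; rewrite leNgt H.
  rewrite /= /Us /Ur /Uset /=; split.
    by right; rewrite /= e2.
  move=> [|] /=; last by rewrite e1 ltNge z2.
  move=> H.
  have hq : ((ss * r - s * rs) * (sig z).1 <= (ss - s) * b2)%R.
    have q1 : (r * (sig z).1 + s * (sig z).2 <= b2)%R by rewrite e1.
    have q2 : (b2 < rs * (sig z).1 + ss * (sig z).2)%R by rewrite e2.
    nra.
  have hp : ((ss - s) * b2 < (ss * r - s * rs) * z.1)%R by nra.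
  have : ((sig z).1 < z.1)%R.
    by rewrite -(ltr_pM2l K0); apply: le_lt_trans hq hp.
  by move=> /lt_le_trans /(_ z1); rewrite ltNge (ltW H).
have mUr : measurable Ur by apply: mUset.
have mUs : measurable Us by apply: mUset.
rewrite (measureDI _ mUr mUs) (measureDI _ mUs mUr) setIC.
apply: leeD2r.
have mD : measurable (Us `\` Ur) by apply: measurableD.
apply: (@le_trans _ _ ((P \x P) (sig @^-1` (Us `\` Ur)))); last first.
  by rewrite le_eqVlt; apply/orP; left; apply/eqP; exact: (gauss_refl ab1 b0 mD).
apply: le_measure => //; rewrite inE; first exact: measurableD.
have msig : measurable_fun setT sig.
  have := mlin2 a b b (- a); congr measurable_fun; apply/funext => z.
  by rewrite /sig mulNr.
by rewrite -[X in measurable X]setTI; apply: msig.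
Qed.
End S8.
Lemma bvn_union (R : realType) (d : measure_display) (T : measurableType d)
  (P : probability T R) (Z1 Z2 : T -> R) (r b1 b2 : R) :
  is_std_bvn P Z1 Z2 r ->
  P ([set t | (b1 < Z1 t)%R] `|` [set t | (b2 < Z2 t)%R]) =
  ((@normal_prob R 0 1) \x (@normal_prob R 0 1))%E (Uset b1 b2 r (Num.sqrt (1 - r ^+ 2))).
Proof.
case=> _ _ H.
have mA : measurable ([set p : R * R | (b1 < p.1)%R] `|` [set p | (b2 < p.2)%R]).
  by apply: measurableU; apply: mset_lt; [exact: measurable_fst | exact: measurable_snd].
have := H _ mA; rewrite /std_bvn_law /pushforward.
by move=> <-.
Qed.
Lemma psd_cs (R : realType) (S : 'M[R]_2) :
  S^T = S -> (forall v : 'cV[R]_2, 0 <= (v^T *m S *m v) ord0 ord0) ->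
  0 < S ord0 ord0 -> S ord0 ord_max ^+ 2 <= S ord0 ord0 * S ord_max ord_max.
Proof.
move=> HS Hpsd H11.
have sym : S ord_max ord0 = S ord0 ord_max.
  by rewrite -{1}HS mxE.
pose v : 'cV[R]_2 := \col_i (if i == ord0 then S ord0 ord_max else - S ord0 ord0).
have := Hpsd v.
rewrite !mxE !big_ord_recl !big_ord0 !mxE !big_ord_recl !big_ord0 !mxE /=.
have -> : lift ord0 ord0 = ord_max :> 'I_2 by apply/val_inj.
rewrite sym => H.
have : 0 <= S ord0 ord0 * (S ord0 ord0 * S ord_max ord_max - S ord0 ord_max ^+ 2).
  by move: H; congr (_ <= _); ring.
by rewrite pmulr_rge0 // subr_ge0.
Qed.
Unset Implicit Arguments.
Theorem theorem2 (R : realType) (S : 'M[R]_2) (b1 b2 : R)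
  (d : measure_display) (T : measurableType d) (P : probability T R)
  (Z1 Z2 : T -> R)
  (d' : measure_display) (T' : measurableType d') (P' : probability T' R)
  (Z1s Z2s : T' -> R) :
  S^T = S ->
  (forall v : 'cV[R]_2, 0 <= (v^T *m S *m v) ord0 ord0) ->
  0 < S ord0 ord0 -> 0 < S ord_max ord_max ->
  let rho := S ord0 ord_max / Num.sqrt (S ord0 ord0 * S ord_max ord_max) in
  let rhos := Num.sqrt (S ord_max ord_max / S ord0 ord0) in
  is_std_bvn P Z1 Z2 rho ->
  is_std_bvn P' Z1s Z2s rhos ->
  b2 <= b1 -> 0 <= b2 ->
  S ord_max ord_max <= S ord0 ord_max ->
  (P ([set t | (b1 < Z1 t)%R] `|` [set t | (b2 < Z2 t)%R])
   <= P' ([set t | (b1 < Z1s t)%R] `|` [set t | (b2 < Z2s t)%R]))%E.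
Proof.
move=> HS Hpsd H11 H22 rho rhos Hb Hbs _ _ H12.
rewrite (bvn_union b1 b2 Hb) (bvn_union b1 b2 Hbs).
have cs := psd_cs HS Hpsd H11.
apply: main_ineq; rewrite /rho /rhos; clear Hb Hbs rho rhos;
  move: cs H12 H22 H11;
  set a := S ord0 ord0; set c := S ord_max ord_max; set m := S ord0 ord_max;
  move=> cs H12 H22 H11.
all: have ac0 : 0 < Num.sqrt (a * c) by rewrite sqrtr_gt0 mulr_gt0.
all: have m0 : 0 <= m by apply: le_trans H12; exact: ltW.
- exact: sqrtr_ge0.
- rewrite ler_pdivlMr //.
  rewrite -sqrtrM; last by rewrite divr_ge0 // ltW.
  have -> : c / a * (a * c) = c ^+ 2 by field; rewrite gt_eqF.
  by rewrite sqrtr_sqr ger0_norm // ltW.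
- rewrite ler_pdivrMr // mul1r.
  by rewrite -(ger0_norm m0) -sqrtr_sqr ler_sqrt // mulr_ge0 // ltW.
Qed.
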